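(* Let $\Bbbk$ be a field and let $\mathbf M$ be a matroid on a finite set $S$ that is representable over $\Bbbk$. Let $b\in S$ and let $\Delta_b=\{J\subseteq S : b\notin \overline{J}\}$ be the affine simplicial complex of $\mathbf M$ away from $b$. Then for all $i\ge 0$ \[ \dim_\Bbbk \widetilde{H}_i(\Delta_b,\Bbbk)=\begin{cases}\beta(\mathbf M) & \text{if } i=r(\mathbf M)-2,\\ 0 & \text{otherwise.}\end{cases} \] Furthermore, if $b$ is not a loop of $\mathbf M$, then this equality holds for all integers $i$.
   Context: $r$ denotes the rank function of $\mathbf M$ and $r(\mathbf M)=r(S)$. $\overline{J}$ denotes the matroid closure of $J$ (the smallest flat containing $J$). A loop is an element $a$ with $\{a\}$ dependent. The $\beta$-invariant is $\beta(\mathbf M)=(-1)^{r(S)}\sum_{J\subseteq S}(-1)^{|J|}r(J)$. $\widetilde H$ denotes reduced simplicial homology with coefficients in $\Bbbk$. *)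

(* Defs.v *)
From HB Require Import structures.
From mathcomp Require Import all_boot all_order all_algebra.
Set Implicit Arguments. Unset Strict Implicit. Unset Printing Implicit Defensive.
Import Order.TTheory GRing.Theory Num.Theory.
Local Open Scope ring_scope.

Record matroid (S : finType) := Matroid {
  mrank : {set S} -> nat;
  mrank_le_card : forall J, (mrank J <= #|J|)%N;
  mrank_mono : forall J K : {set S}, J \subset K -> (mrank J <= mrank K)%N;
  mrank_submod : forall J K : {set S},
    (mrank (J :|: K) + mrank (J :&: K) <= mrank J + mrank K)%N
}.

Definition representable (k : fieldType) (S : finType) (M : matroid S) : Prop :=
  exists (n : nat) (v : S -> 'rV[k]_n),
    forall J : {set S}, mrank M J = \rank (\sum_(j in J) <<v j>>)%MS.

Definition mrankM (S : finType) (M : matroid S) : nat := mrank M [set: S].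

Definition mclosure (S : finType) (M : matroid S) (J : {set S}) : {set S} :=
  [set x | mrank M (x |: J) == mrank M J].

Definition is_loop (S : finType) (M : matroid S) (a : S) : bool :=
  mrank M [set a] == 0%N.

Definition beta_inv (S : finType) (M : matroid S) : int :=
  (-1) ^+ mrankM M * \sum_(J : {set S}) (-1) ^+ #|J| * (mrank M J)%:Z.

Definition affine_complex (S : finType) (M : matroid S) (b : S) : {set {set S}} :=
  [set J : {set S} | b \notin mclosure M J].

(* i-dimensional faces: faces with i+1 vertices (i = -1 gives the empty face) *)
Definition faces (S : finType) (D : {set {set S}}) (i : int) : {set {set S}} :=
  [set s in D | (#|s|%:Z == i + 1)].

(* incidence sign [sigma : tau] for tau = sigma \ {x}, vertices ordered
   via the enumeration of S *)
Definition bd_coef (k : fieldType) (S : finType) (s t : {set S}) : k :=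
  \sum_(x in s | t == s :\ x)
     (-1) ^+ #|[set y in s | (enum_rank y < enum_rank x)%N]|.

(* boundary map d_i : C_i -> C_{i-1}, as a matrix acting on row vectors
   (row sigma = boundary of sigma). *)
Definition bdmx (k : fieldType) (S : finType) (D : {set {set S}}) (i : int)
  : 'M[k]_(#|faces D i|, #|faces D (i - 1)|) :=
  \matrix_(p, q) bd_coef k (enum_val p) (enum_val q).

(* dim_k of reduced homology H~_i(D, k) = dim (ker d_i / im d_{i+1}).
   The boundaries im d_{i+1} are the rows of bdmx (i+1), indexed by
   faces D ((i+1) - 1) which we cast to faces D i. *)
Definition red_homology_dim (k : fieldType) (S : finType) (D : {set {set S}})
  (i : int) : nat :=
  let Z := kermx (bdmx k D i) in
  let B := bdmx k D (i + 1) in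
  let B' : 'M[k]_(#|faces D (i + 1)|, #|faces D i|) :=
    castmx (erefl, congr1 (fun j => #|faces D j|) (addrK 1 i)) B in
  \rank (Z :\: B')%MS.

(* Main.v *)
Require Import Defs.
From mathcomp Require Import all_boot all_order all_algebra.
From mathcomp Require Import ring zify.
Import Order.TTheory GRing.Theory Num.Theory.
Local Open Scope ring_scope.
Set Implicit Arguments. Unset Strict Implicit. Unset Printing Implicit Defensive.

Definition pos {S : finType} (s : {set S}) (x : S) : nat :=
  #|[set y in s | (enum_rank y < enum_rank x)%N]|.
Definition sg (k : fieldType) {S : finType} (s : {set S}) (x : S) : k :=
  (-1) ^+ pos s x.

Lemma posU {S : finType} (s : {set S}) x y : x \notin s ->
  pos (x |: s) y = (pos s y + (enum_rank x < enum_rank y))%N.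
Proof.
move=> xs; rewrite /pos.
case h: (enum_rank x < enum_rank y)%N.
  have -> : [set z in x |: s | (enum_rank z < enum_rank y)%N] =
    x |: [set z in s | (enum_rank z < enum_rank y)%N].
    apply/setP=> z; rewrite !inE; case: (eqVneq z x) => [->|nzx] /=;
    by rewrite ?h ?(negbTE xs) ?andbF ?orbF.
  by rewrite cardsU1 inE (negbTE xs) /= addnC addn1.
have -> : [set z in x |: s | (enum_rank z < enum_rank y)%N] =
  [set z in s | (enum_rank z < enum_rank y)%N].
  apply/setP=> z; rewrite !inE; case: (eqVneq z x) => [->|nzx] /=;
  by rewrite ?h ?(negbTE xs) ?andbF ?orbF.
by rewrite addn0.
Qed.

Lemma posD1 {S : finType} (s : {set S}) x y : x \in s ->
  pos s y = (pos (s :\ x) y + (enum_rank x < enum_rank y))%N.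
Proof.
move=> xs; rewrite -{1}(setD1K xs) posU //.
by rewrite !inE eqxx.
Qed.

Lemma sg_sq (k : fieldType) {S : finType} (s : {set S}) x :
  sg k s x * sg k s x = 1.
Proof. by rewrite /sg -expr2 sqrr_sign. Qed.

Lemma bd_coefE (k : fieldType) {S : finType} (s t : {set S}) :
  bd_coef k s t = \sum_(x in s | t == s :\ x) sg k s x.
Proof. by []. Qed.

Lemma setD1_inj {S : finType} (s : {set S}) x y : x \in s -> y \in s ->
  s :\ x = s :\ y -> x = y.
Proof.
move=> xs ys e; apply/eqP; apply: contraT => neq.
have : x \in s :\ y by rewrite !inE neq xs.
by rewrite -e !inE eqxx.
Qed.

Lemma bd_coef_D1 (k : fieldType) {S : finType} (s : {set S}) x :
  x \in s -> bd_coef k s (s :\ x) = sg k s x.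
Proof.
move=> xs; rewrite bd_coefE (big_pred1 x) // => y /=.
apply/andP/eqP => [[ys /eqP e]|->]; last by split.
by apply: setD1_inj ys xs _; rewrite e.
Qed.

Lemma bd_coef0 (k : fieldType) {S : finType} (s t : {set S}) :
  (forall x, x \in s -> t <> s :\ x) -> bd_coef k s t = 0.
Proof.
move=> H; rewrite bd_coefE big1 // => x /andP[xs /eqP e].
by case: (H x xs).
Qed.

Lemma bd_coef_sum (k : fieldType) {S : finType} (s : {set S}) (g : {set S} -> k) :
  \sum_σ bd_coef k s σ * g σ = \sum_(x in s) sg k s x * g (s :\ x).
Proof.
under eq_bigr do rewrite bd_coefE big_distrl.
rewrite (exchange_big_dep (fun x => x \in s)) /=; last by move=> i j _ /andP[].
apply: eq_bigr => x xs; rewrite (big_pred1 (s :\ x)) // => σ /=.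
by rewrite xs.
Qed.

Lemma setU1D1C {S : finType} (s : {set S}) e x : x != e ->
  (e |: s) :\ x = e |: (s :\ x).
Proof.
move=> xe; apply/setP=> z; rewrite !inE.
case: (eqVneq z e) => [->|] /=; last by [].
by rewrite eq_sym xe.
Qed.

Lemma sign_pair (k : fieldType) (a p : nat) (b1 b2 : bool) : b1 (+) b2 ->
  (-1) ^+ (a + b1) * (-1) ^+ (p + b2) + (-1) ^+ a * (-1) ^+ p = 0 :> k.
Proof.
by case: b1; case: b2 => //= _; rewrite !exprD !expr1 !expr0; ring.
Qed.

Lemma keyK (k : fieldType) {S : finType} (e : S) (s t : {set S}) :
  (if e \in s then 0 else sg k (e |: s) e * bd_coef k (e |: s) t) +
  (if e \in t then sg k t e * bd_coef k s (t :\ e) else 0) = (s == t)%:R.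
Proof.
case es: (e \in s); case et: (e \in t) => /=; rewrite ?add0r ?addr0.
- case: (eqVneq s t) => [<-|/eqP nst].
    by rewrite bd_coef_D1 // sg_sq.
  rewrite bd_coef0 ?mulr0 // => x xs e1.
  case: (eqVneq x e) => [xe|xe].
    by apply: nst; rewrite -(setD1K es) -(setD1K et) e1 xe.
  have : e \in s :\ x by rewrite !inE eq_sym xe es.
  by rewrite -e1 !inE eqxx.
- by case: (eqVneq s t) => [st|//]; rewrite st et in es.
- case: (eqVneq s t) => [st|/eqP nst]; first by rewrite st et in es.
  rewrite /=.
  case: (boolP [exists x in s, t == e |: (s :\ x)]).
  + move=> /exists_inP [x xs /eqP tE].
    have xe : x != e by apply: contraTneq xs => ->; rewrite es.
    have E1 : t = (e |: s) :\ x by rewrite setU1D1C.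
    have E2 : t :\ e = s :\ x by rewrite tE setU1K // !inE es andbF.
    rewrite {1}E1 bd_coef_D1; last by rewrite !inE xs orbT.
    rewrite E2 bd_coef_D1 // /sg.
    rewrite posU ?es // ltnn addn0 posU ?es //.
    rewrite tE posU ?(negbT es) ?inE ?es ?andbF // ltnn addn0.
    rewrite (posD1 e xs).
    apply: sign_pair.
    have ne : enum_rank x != enum_rank e.
      by apply: contra xe => /eqP /enum_rank_inj ->.
    by case: (ltngtP (enum_rank x) (enum_rank e)) => //= h; by rewrite -val_eqE /= h eqxx in ne.
  + move=> /exists_inPn H.
    have Z1 : bd_coef k (e |: s) t = 0.
      apply: bd_coef0 => x /setU1P[->|xs] e1.
        by apply: nst; rewrite e1 setU1K ?es.
      have xe : x != e by apply: contraTneq xs => ->; rewrite es.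
      by move: (H x xs); rewrite e1 setU1D1C // eqxx.
    have Z2 : bd_coef k s (t :\ e) = 0.
      apply: bd_coef0 => x xs e1.
      by move: (H x xs); rewrite -e1 (setD1K et) eqxx.
    by rewrite Z1 Z2 !mulr0 addr0.
- case: (eqVneq s t) => [<-|/eqP nst].
    by rewrite -{3}(setU1K (negbT es)) bd_coef_D1 ?sg_sq // !inE eqxx.
  rewrite bd_coef0 ?mulr0 // => x xs e1.
  case: (eqVneq x e) => [xe|xe].
    by apply: nst; rewrite e1 xe setU1K ?es.
  by move: et; rewrite e1 !inE eqxx eq_sym xe.
Qed.

Definition bd (k : fieldType) {S : finType} (f : {set S} -> k) (t : {set S}) : k :=
  \sum_s f s * bd_coef k s t.
Definition Hc (k : fieldType) {S : finType} (e : S) (f : {set S} -> k)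
  (s : {set S}) : k := if e \in s then sg k s e * f (s :\ e) else 0.

Lemma sum_delta (k : fieldType) {S : finType} (f : {set S} -> k) t :
  \sum_s f s * (s == t)%:R = f t.
Proof.
rewrite (bigD1 t) //= eqxx mulr1 big1 ?addr0 // => s /negbTE ->.
by rewrite mulr0.
Qed.

Lemma coneH (k : fieldType) {S : finType} (e : S) (f : {set S} -> k) t :
  bd (Hc e f) t + Hc e (bd f) t = f t.
Proof.
rewrite /bd /Hc.
pose tog := fun σ : {set S} => if e \in σ then σ :\ e else e |: σ.
have togK : involutive tog.
  move=> σ; rewrite /tog; case h: (e \in σ).
    by rewrite !inE eqxx /= setD1K.
  by rewrite setU11 setU1K ?h.
rewrite (reindex_inj (inv_inj togK)) /=.
have -> : \sum_σ (if e \in tog σ then sg k (tog σ) e * f (tog σ :\ e) else 0)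
      * bd_coef k (tog σ) t =
    \sum_σ f σ * (if e \in σ then 0 else sg k (e |: σ) e * bd_coef k (e |: σ) t).
  apply: eq_bigr => σ _; rewrite /tog; case h: (e \in σ).
    by rewrite !inE eqxx /= mul0r mulr0.
  by rewrite setU11 setU1K ?h // mulrA [f σ * _]mulrC.
have -> : (if e \in t then sg k t e * \sum_s f s * bd_coef k s (t :\ e) else 0) =
    \sum_s f s * (if e \in t then sg k t e * bd_coef k s (t :\ e) else 0).
  case: ifP => _; last by rewrite big1 // => s _; rewrite mulr0.
  by rewrite mulr_sumr; apply: eq_bigr => s _; rewrite mulrA [sg k t e * _]mulrC mulrA.
rewrite -big_split /=.
under eq_bigr do rewrite -mulrDr keyK.
exact: sum_delta.
Qed.

Lemma bd_coef_sub (k : fieldType) {S : finType} (s t : {set S}) :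
  bd_coef k s t != 0 -> exists2 x, x \in s & t = s :\ x.
Proof.
move=> nz; case: (boolP [exists x in s, t == s :\ x]).
  by move=> /exists_inP [x xs /eqP ->]; exists x.
move=> /exists_inPn H; move: nz; rewrite bd_coef0 ?eqxx // => x xs e1.
by move: (H x xs); rewrite e1 eqxx.
Qed.

Lemma setD1C {S : finType} (s : {set S}) x y : s :\ x :\ y = s :\ y :\ x.
Proof. by apply/setP=> z; rewrite !inE andbCA. Qed.

Lemma bdbd (k : fieldType) {S : finType} (s t : {set S}) :
  \sum_σ bd_coef k s σ * bd_coef k σ t = 0.
Proof.
rewrite bd_coef_sum.
under eq_bigr do rewrite bd_coefE big_distrr.
pose F := fun x y => if (x \in s) && ((y \in s :\ x) && (t == s :\ x :\ y))
  then sg k s x * sg k (s :\ x) y else 0.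
have -> : \sum_(x in s) \sum_(y in s :\ x | t == s :\ x :\ y)
    sg k s x * sg k (s :\ x) y = \sum_x \sum_y F x y.
  rewrite big_mkcond; apply: eq_bigr => x _ /=.
  case: ifP => xs; last by rewrite big1 // => y _; rewrite /F xs.
  by rewrite big_mkcond; apply: eq_bigr => y _; rewrite /F xs.
have -> : \sum_x \sum_y F x y = \sum_x \sum_y
   ((if (enum_rank x < enum_rank y)%N then F x y else 0) +
    (if (enum_rank y < enum_rank x)%N then F x y else 0)).
  apply: eq_bigr => x _; apply: eq_bigr => y _.
  case: (ltngtP (enum_rank x) (enum_rank y)) => h; rewrite ?addr0 ?add0r //.
  have -> : y = x by apply: enum_rank_inj; apply: val_inj.
  by rewrite /F !inE eqxx /= andbF.
under eq_bigr do rewrite big_split /=.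
rewrite big_split /= [X in _ + X]exchange_big /=.
rewrite -big_split /= big1 // => x _; rewrite -big_split /= big1 // => y _.
case: ltngtP => h; rewrite ?addr0 ?add0r //.
rewrite /F !inE setD1C.
case: (eqVneq y x) => [yx|yx]; first by rewrite yx ltnn in h.
case: (eqVneq x y) => [xy|xy]; first by rewrite xy eqxx in yx.
case xs: (x \in s); case ys: (y \in s); case: (t == _) => //=; rewrite ?addr0 //.
rewrite /sg [pos s y](posD1 y xs) [pos s x](posD1 x ys) h.
rewrite ltnNge (ltnW h) /= addn0 addn1 exprS; ring.
Qed.

Definition supp_in (k : fieldType) {S : finType} (f : {set S} -> k)
  (A : {set {set S}}) := forall s, f s != 0 -> s \in A.
Definition Acyc (k : fieldType) {S : finType} (D : {set {set S}}) (i : int) :=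
  forall f : {set S} -> k, supp_in f (faces D i) -> (forall t, bd f t = 0) ->
  exists g, supp_in g (faces D (i + 1)) /\ (forall t, bd g t = f t).

Lemma bd_ext (k : fieldType) {S : finType} (f g : {set S} -> k) t :
  f =1 g -> bd f t = bd g t.
Proof. by move=> fg; apply: eq_bigr => s _; rewrite fg. Qed.

Lemma bd_add (k : fieldType) {S : finType} (f g : {set S} -> k) t :
  bd (fun s => f s + g s) t = bd f t + bd g t.
Proof. by rewrite /bd -big_split; apply: eq_bigr => s _; rewrite mulrDl. Qed.

Lemma bd_opp (k : fieldType) {S : finType} (f : {set S} -> k) t :
  bd (fun s => - f s) t = - bd f t.
Proof. by rewrite /bd -sumrN; apply: eq_bigr => s _; rewrite mulNr. Qed.

Lemma bd_sub (k : fieldType) {S : finType} (f g : {set S} -> k) t :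
  bd (fun s => f s - g s) t = bd f t - bd g t.
Proof. by rewrite bd_add bd_opp. Qed.

Lemma bdbd_fun (k : fieldType) {S : finType} (f : {set S} -> k) t :
  bd (bd f) t = 0.
Proof.
rewrite /bd; under eq_bigr do rewrite big_distrl.
rewrite exchange_big /= big1 // => s _.
under eq_bigr do rewrite -mulrA.
by rewrite -mulr_sumr bdbd mulr0.
Qed.

Lemma mul_nz_r (k : fieldType) (a b : k) : a * b != 0 -> b != 0.
Proof. by apply: contraNneq => ->; rewrite mulr0. Qed.

Lemma in_faces {S : finType} (D : {set {set S}}) i s :
  (s \in faces D i) = (s \in D) && (#|s|%:Z == i + 1).
Proof. by rewrite /faces inE. Qed.

Lemma cone_acyc (k : fieldType) {S : finType} (D : {set {set S}}) e i :
  (forall τ, τ \in D -> e \notin τ -> e |: τ \in D) -> Acyc k D i.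
Proof.
move=> cone f sf cyc; exists (Hc e f); split.
  move=> σ; rewrite /Hc; case: ifP => eσ; last by rewrite eqxx.
  move=> /mul_nz_r /sf; rewrite !in_faces => /andP[Dσ /eqP c].
  have := cone _ Dσ; rewrite setD1K // !inE eqxx /= => -> //=.
  rewrite (cardsD1 e σ) eσ; apply/eqP; rewrite PoszD c; lia.
move=> t; move: (coneH e f t); rewrite {2}/Hc cyc mulr0 if_same addr0.
by [].
Qed.

Lemma glue_acyc (k : fieldType) {S : finType} (D : {set {set S}}) e i :
  (forall J : {set S}, e |: J \in D -> J \in D) ->
  Acyc k [set J : {set S} in D | e \notin J] i ->
  Acyc k [set J : {set S} | (e \notin J) && (e |: J \in D)] (i - 1) ->
  Acyc k D i.
Proof.
move=> dc Adel Alink z sz cz.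
pose x := fun s : {set S} => if e \in s then 0 else z s.
pose y := fun τ : {set S} => if e \in τ then 0 else sg k (e |: τ) e * z (e |: τ).
have zE : forall s, z s = x s + Hc e y s.
  move=> s; rewrite /x /Hc /y; case es: (e \in s); rewrite ?add0r ?addr0 //.
  by rewrite !inE eqxx /= setD1K // mulrA sg_sq mul1r.
have bdx_e : forall t : {set S}, e \in t -> bd x t = 0.
  move=> t et; rewrite /bd big1 // => s _; rewrite /x; case: ifP => es.
    by rewrite mul0r.
  rewrite bd_coef0 ?mulr0 // => u us tE.
  by move: et; rewrite tE !inE es andbF.
have yE : forall t : {set S}, y t = - bd x t.
  move=> t; case et: (e \in t).
    by rewrite /y et bdx_e // oppr0.
  move: (cz t) (coneH e y t); rewrite (bd_ext _ zE) bd_add /Hc et addr0.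
  move=> h1 h2; rewrite h2 in h1; move/eqP: h1; rewrite addr_eq0 => /eqP ->.
  by rewrite opprK.
have cy : forall t : {set S}, bd y t = 0.
  by move=> t; rewrite (bd_ext _ yE) bd_opp bdbd_fun oppr0.
have sy : supp_in y (faces [set J : {set S} | (e \notin J) && (e |: J \in D)] (i - 1)).
  move=> τ; rewrite /y; case: ifP => eτ; first by rewrite eqxx.
  move=> /mul_nz_r /sz; rewrite !in_faces => /andP[D1 /eqP c1].
  rewrite !inE eτ D1 /=; apply/eqP; move: c1; rewrite cardsU1 eτ PoszD; lia.
have [v [sv bv]] := Alink y sy cy.
pose x' := fun s : {set S} => x s + v s.
have sx' : supp_in x' (faces [set J : {set S} in D | e \notin J] i).
  move=> s nz; case: (eqVneq (x s) 0) => [x0|xn].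
    rewrite /x' x0 add0r in nz.
    move: (sv s nz); rewrite !in_faces !inE => /andP[/andP[es D1] /eqP c1].
    rewrite es (dc _ D1) /=; apply/eqP; rewrite c1; lia.
  move: xn; rewrite /x; case: ifP => es; first by rewrite eqxx.
  move=> /sz; rewrite !in_faces !inE es => /andP[-> ->]; by [].
have cx' : forall t : {set S}, bd x' t = 0.
  by move=> t; rewrite bd_add bv yE addrN.
have [u [su bu]] := Adel x' sx' cx'.
exists (fun s : {set S} => u s - Hc e v s); split.
  move=> s nz; case: (eqVneq (u s) 0) => [u0|un].
    rewrite u0 sub0r oppr_eq0 /Hc in nz; move: nz.
    case: ifP => es; last by rewrite eqxx.
    move=> /mul_nz_r /sv; rewrite !in_faces !inE => /andP[/andP[_ D1] /eqP c1].
    rewrite setD1K // in D1; rewrite D1 /=; apply/eqP.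
    move: c1; rewrite (cardsD1 e s) es PoszD; lia.
  move: (su s un); rewrite !in_faces !inE => /andP[/andP[D1 _] ->].
  by rewrite D1.
move=> t; rewrite bd_sub bu.
have -> : bd (Hc e v) t = v t - Hc e y t.
  have -> : Hc e y t = Hc e (bd v) t by rewrite /Hc; case: ifP => // _; rewrite bv.
  by rewrite -(coneH e v t) addrK.
rewrite /x' zE; ring.
Qed.

Definition Dlt {S : finType} (M : matroid S) (E : {set S}) (b : S) : {set {set S}} :=
  [set J : {set S} | (J \subset E) && (mrank M (b |: J) != mrank M J)].

Lemma r_submod {S : finType} (M : matroid S) (J K : {set S}) :
  (mrank M (J :|: K) + mrank M (J :&: K) <= mrank M J + mrank M K)%N.
Proof. exact: mrank_submod. Qed.

Lemma r_U1 {S : finType} (M : matroid S) x (X : {set S}) :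
  (mrank M (x |: X) <= mrank M [set x] + mrank M X)%N.
Proof. have := r_submod M [set x] X; lia. Qed.

Lemma r_1 {S : finType} (M : matroid S) x : (mrank M [set x] <= 1)%N.
Proof. by have := mrank_le_card M [set x]; rewrite cards1. Qed.

Lemma r_le_U1 {S : finType} (M : matroid S) x (X : {set S}) :
  (mrank M X <= mrank M (x |: X))%N.
Proof. by apply: mrank_mono; rewrite subsetUr. Qed.

Lemma r_e_le {S : finType} (M : matroid S) x (X : {set S}) :
  (mrank M [set x] <= mrank M (x |: X))%N.
Proof. by apply: mrank_mono; rewrite subsetUl. Qed.

Definition contr_rank {S : finType} (M : matroid S) (e : S) (X : {set S}) : nat :=
  (mrank M (e |: X) - mrank M [set e])%N.

Lemma contr_le_card {S : finType} (M : matroid S) e (X : {set S}) :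
  (contr_rank M e X <= #|X|)%N.
Proof.
rewrite /contr_rank; have := r_U1 M e X; have := mrank_le_card M X; lia.
Qed.

Lemma contr_mono {S : finType} (M : matroid S) e (J K : {set S}) :
  J \subset K -> (contr_rank M e J <= contr_rank M e K)%N.
Proof.
move=> JK; rewrite /contr_rank.
have := mrank_mono M (setUS [set e] JK); lia.
Qed.

Lemma contr_submod {S : finType} (M : matroid S) e (J K : {set S}) :
  (contr_rank M e (J :|: K) + contr_rank M e (J :&: K) <=
   contr_rank M e J + contr_rank M e K)%N.
Proof.
rewrite /contr_rank.
have h := r_submod M (e |: J) (e |: K).
rewrite -setUUr -setUIr in h.
have := r_e_le M e (J :|: K); have := r_e_le M e (J :&: K).
have := r_e_le M e J; have := r_e_le M e K; lia.
Qed.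

Definition contr {S : finType} (M : matroid S) (e : S) : matroid S :=
  @Matroid S (contr_rank M e) (contr_le_card M e) (contr_mono M e)
    (contr_submod M e).

Lemma Dlt_dc {S : finType} (M : matroid S) E b (J K : {set S}) :
  K \in Dlt M E b -> J \subset K -> J \in Dlt M E b.
Proof.
rewrite !inE => /andP[KE rK] JK; rewrite (subset_trans JK KE) /=.
apply: contra rK => /eqP rJ.
case bK: (b \in K); first by rewrite (setUidPr (_ : [set b] \subset K)) ?sub1set ?bK.
have h := r_submod M (b |: J) K.
have e1 : (b |: J) :|: K = b |: K by rewrite -setUA (setUidPr JK).
have e2 : (b |: J) :&: K = J.
  apply/setP=> z; rewrite !inE; case: (eqVneq z b) => [->|] /=.
    by rewrite bK; apply/esym/negP => /(subsetP JK); rewrite bK.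
  by move=> _; apply/andb_idr => /(subsetP JK).
rewrite e1 e2 in h.
have := r_le_U1 M b K; rewrite eqn_leq; lia.
Qed.

Lemma acyc_nofaces (k : fieldType) {S : finType} (D : {set {set S}}) i :
  (forall s, s \in faces D i -> False) -> Acyc k D i.
Proof.
move=> H f sf _; exists (fun _ => 0); split; first by move=> s; rewrite eqxx.
move=> t; case: (eqVneq (f t) 0) => [->|/sf/H] //.
by rewrite /bd big1 // => s _; rewrite mul0r.
Qed.

Lemma r_loop {S : finType} (M : matroid S) e (X : {set S}) :
  mrank M [set e] = 0%N -> mrank M (e |: X) = mrank M X.
Proof. move=> h; have := r_U1 M e X; have := r_le_U1 M e X; lia. Qed.

Lemma r_coloop {S : finType} (M : matroid S) (E : {set S}) e (X : {set S}) :
  e \in E -> (mrank M (E :\ e) < mrank M E)%N -> X \subset E :\ e ->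
  mrank M (e |: X) = (mrank M X).+1.
Proof.
move=> eE colp XE.
have h := r_submod M (e |: X) (E :\ e).
have e1 : (e |: X) :|: (E :\ e) = E by rewrite -setUA (setUidPr XE) setD1K.
have e2 : (e |: X) :&: (E :\ e) = X.
  apply/setP=> z; rewrite !inE; case: (eqVneq z e) => [->|] /=.
    by apply/esym/negP => /(subsetP XE); rewrite !inE eqxx.
  move=> _; apply/andb_idr => /(subsetP XE); rewrite !inE => /andP[].
  by [].
rewrite e1 e2 in h.
have := r_U1 M e X; have := r_1 M e; lia.
Qed.

Lemma vanish (k : fieldType) {S : finType} n : forall (M : matroid S) (E : {set S}) (b : S),
  #|E| = n -> b \in E -> forall i : int, i != (mrank M E)%:Z - 2 ->
  Acyc k (Dlt M E b) i.
Proof.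
elim: n => [|n IH] M E b cE bE i hi.
  by move/eqP: cE; rewrite cards_eq0 => /eqP E0; rewrite E0 inE in bE.
case: (set_0Vmem (E :\ b)) => [E0 | [e eEb]].
  apply: acyc_nofaces => s; rewrite in_faces !inE => /andP[/andP[sE rs] /eqP cs].
  have s0 : s = set0.
    apply/eqP; rewrite -subset0 -E0 subsetD1 sE /=.
    apply: contra rs => bs.
    by rewrite (setUidPr (_ : [set b] \subset s)) ?sub1set.
  have r0 : mrank M set0 = 0%N.
    by have := mrank_le_card M set0; rewrite cards0; lia.
  rewrite s0 setU0 r0 in rs.
  rewrite s0 cards0 in cs.
  have Eb : E = [set b] by rewrite -(setD1K bE) E0 setU0.
  have rb := r_1 M b.
  move/eqP: hi; rewrite Eb.
  move: rs; case: (mrank M [set b]) rb => [|[|m]] //= _ _; lia.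
move: eEb; rewrite !inE => /andP[eb eE].
have cE' : #|E :\ e| = n by move: cE; rewrite (cardsD1 e E) eE; case.
have bE' : b \in E :\ e by rewrite !inE eq_sym eb bE.
case: (eqVneq (mrank M [set e]) 0%N) => [loop|nloop].
  apply: (@cone_acyc k S _ e) => τ; rewrite !inE => /andP[τE rτ] eτ.
  by rewrite subUset sub1set eE τE /= setUCA !(r_loop _ loop).
case: (boolP (mrank M (E :\ e) < mrank M E)%N) => [colp|ncolp].
  apply: (@cone_acyc k S _ e) => τ; rewrite !inE => /andP[τE rτ] eτ.
  have τE' : τ \subset E :\ e by rewrite subsetD1 τE eτ.
  have bτE' : b |: τ \subset E :\ e by rewrite subUset sub1set bE' τE'.
  rewrite subUset sub1set eE τE /= setUCA (r_coloop eE colp τE').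
  by rewrite (r_coloop eE colp bτE') eqSS.
have rEe : mrank M (E :\ e) = mrank M E.
  apply/eqP; rewrite eqn_leq mrank_mono ?subD1set //=.
  by rewrite leqNgt.
have re1 : mrank M [set e] = 1%N by have := r_1 M e; lia.
have rE1 : (1 <= mrank M E)%N.
  by rewrite -re1; apply: mrank_mono; rewrite sub1set.
apply: (@glue_acyc k S _ e).
- by move=> J /Dlt_dc; apply; rewrite subsetUr.
- have -> : [set J in Dlt M E b | e \notin J] = Dlt M (E :\ e) b.
    by apply/setP=> J; rewrite !inE subsetD1 andbAC.
  by apply: IH cE' bE' _ _; rewrite rEe.
- have -> : [set J : {set S} | (e \notin J) && (e |: J \in Dlt M E b)] =
            Dlt (contr M e) (E :\ e) b.
    apply/setP=> J; rewrite !inE subsetD1 subUset sub1set eE /= /contr_rank.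
    rewrite setUCA.
    have h1 := r_e_le M e (b |: J); have h2 := r_e_le M e J.
    have -> : (mrank M (e |: (b |: J)) - mrank M [set e] !=
               mrank M (e |: J) - mrank M [set e])%N =
              (mrank M (e |: (b |: J)) != mrank M (e |: J)).
      by apply/idP/idP; apply: contra => /eqP h; apply/eqP; lia.
    by case: (e \in J) (J \subset E) => [] [].
  apply: IH cE' bE' _ _.
  rewrite /= /contr_rank setD1K // re1.
  move/eqP: hi => hi; apply/eqP; move=> h; apply: hi; move: h; lia.
Qed.

Definition dclosed {S : finType} (D : {set {set S}}) :=
  forall J K : {set S}, K \in D -> J \subset K -> J \in D.

Lemma bd_coef_face (k : fieldType) {S : finType} (D : {set {set S}}) i s t :
  dclosed D -> s \in faces D i -> bd_coef k s t != 0 -> t \in faces D (i - 1).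
Proof.
move=> dc; rewrite !in_faces => /andP[sD /eqP cs] /bd_coef_sub [x xs ->].
rewrite (dc _ _ sD) ?subD1set //=; apply/eqP.
move: cs; rewrite (cardsD1 x s) xs PoszD; lia.
Qed.

Lemma sum_in_all (R : nmodType) {T : finType} (A : {pred T}) (F : T -> R) :
  (forall s, s \notin A -> F s = 0) -> \sum_(s in A) F s = \sum_s F s.
Proof.
move=> H; rewrite [RHS](bigID (mem A)) /= [X in _ + X]big1 ?addr0 //.
Qed.

Lemma enum_val_cast {S : finType} (D : {set {set S}}) (i j : int) (Hj : j = i)
  (e : #|faces D j| = #|faces D i|) (p : 'I_#|faces D i|) :
  enum_val (cast_ord (esym e) p) = enum_val p.
Proof.
subst j; congr enum_val; exact: val_inj.
Qed.

Lemma bdmxE (k : fieldType) {S : finType} (D : {set {set S}}) i p q :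
  bdmx k D i p q = bd_coef k (enum_val p) (enum_val q).
Proof. by rewrite /bdmx mxE. Qed.

Lemma bdbd_mx (k : fieldType) {S : finType} (D : {set {set S}}) i :
  dclosed D ->
  (castmx (erefl, congr1 (fun j => #|faces D j|) (addrK 1 i)) (bdmx k D (i + 1))
     *m bdmx k D i = 0)%R.
Proof.
move=> dc; apply/matrixP => q t; rewrite !mxE.
under eq_bigr do rewrite castmxE bdmxE bdmxE
  (enum_val_cast (addrK 1 i)) (enum_val_cast (erefl (i + 1))).
rewrite -(big_enum_val (A := fun x => x \in faces D i)
  (fun σ => bd_coef k (enum_val q) σ * bd_coef k σ (enum_val t))) /=.
rewrite sum_in_all ?bdbd // => σ nσ.
case: (eqVneq (bd_coef k (enum_val q) σ) 0) => [->|nz]; first by rewrite mul0r.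
have := bd_coef_face dc (enum_valP q) nz; rewrite addrK => h.
by rewrite h in nσ.
Qed.

Lemma rank_castmx (F : fieldType) m1 n1 m2 n2 (e : (m1 = m2) * (n1 = n2))
  (A : 'M[F]_(m1, n1)) : \rank (castmx e A) = \rank A.
Proof. by case: e => e1 e2; case: m2 / e1; case: n2 / e2; rewrite castmx_id. Qed.

Lemma h_formula (k : fieldType) {S : finType} (D : {set {set S}}) (i : int) :
  dclosed D ->
  ((red_homology_dim k D i)%:Z =
   #|faces D i|%:Z - (\rank (bdmx k D i))%:Z - (\rank (bdmx k D (i + 1)))%:Z)%R.
Proof.
move=> dc; rewrite /red_homology_dim /=.
set Z := kermx _; set B' := castmx _ _.
have BZ : (B' <= Z)%MS by apply/sub_kermxP; apply: bdbd_mx.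
have h := mxrank_cap_compl Z B'.
rewrite (capmx_idPr BZ) in h.
have rB : \rank B' = \rank (bdmx k D (i + 1)) by rewrite /B' rank_castmx.
have rZ : \rank Z = (#|faces D i| - \rank (bdmx k D i))%N by rewrite mxrank_ker.
have l1 := mxrankS BZ.
have l2 := rank_leq_row (bdmx k D i).
have hd : \rank (Z :\: B') = (\rank Z - \rank B')%N by lia.
rewrite hd rZ rB.
have le1 : (\rank (bdmx k D (i+1)) <= #|faces D i| - \rank (bdmx k D i))%N.
  by rewrite -rB -rZ.
by rewrite -subzn // -subzn.
Qed.

Lemma acyc_zero (k : fieldType) {S : finType} (D : {set {set S}}) (i : int) :
  dclosed D -> Acyc k D i -> red_homology_dim k D i = 0%N.
Proof.
move=> dc A; rewrite /red_homology_dim /=.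
set Z := kermx _; set B' := castmx _ _.
suff ZB : (Z <= B')%MS.
  have h := mxrank_cap_compl Z B'.
  rewrite (capmx_idPl ZB) in h; lia.
apply/row_subP => p0; set u := row p0 Z.
have uA : (u *m bdmx k D i = 0)%R by apply/sub_kermxP; rewrite row_sub.
pose f := fun s : {set S} =>
  \sum_(p < #|faces D i|) ((enum_val p == s)%:R * u 0 p)%R.
have fv : forall q, f (enum_val q) = u 0 q.
  move=> q; rewrite /f (bigD1 q) //= eqxx mul1r big1 ?addr0 // => p npq.
  by rewrite (inj_eq enum_val_inj) (negbTE npq) mul0r.
have sf : supp_in f (faces D i).
  move=> s nz; apply: contraNT nz => ns; apply/eqP; rewrite /f big1 // => p _.
  case: eqP => [ps|]; last by rewrite mul0r.
  by move: (enum_valP p); rewrite ps (negbTE ns).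
have bdf : forall t, bd f t = \sum_(p < #|faces D i|) (u 0 p * bd_coef k (enum_val p) t)%R.
  move=> t; rewrite /bd /f; under eq_bigr do rewrite big_distrl.
  rewrite exchange_big; apply: eq_bigr => p _ /=.
  rewrite (bigD1 (enum_val p)) //= eqxx mul1r big1 ?addr0 // => s ns.
  by rewrite eq_sym (negbTE ns) mul0r mul0r.
have cf : forall t, bd f t = 0.
  move=> t; rewrite bdf; case: (boolP (t \in faces D (i - 1))) => tf.
    rewrite -(enum_rankK_in tf tf).
    move/matrixP: uA => /(_ 0 (enum_rank_in tf t)); rewrite !mxE => h.
    by rewrite -[RHS]h; apply: eq_bigr => p _; rewrite bdmxE.
  rewrite big1 // => p _.
  case: (eqVneq (bd_coef k (enum_val p) t) 0) => [->|nz]; first by rewrite mulr0.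
  by have := bd_coef_face dc (enum_valP p) nz; rewrite (negbTE tf).
have [g [sg' bg]] := A f sf cf.
apply/submxP; exists (\row_q g (enum_val q)).
apply/rowP => p; rewrite [RHS]mxE /B'.
under eq_bigr do rewrite castmxE bdmxE mxE
  (enum_val_cast (addrK 1 i)) (enum_val_cast (erefl (i + 1))).
rewrite -(big_enum_val (A := fun x => x \in faces D (i + 1))
  (fun σ => g σ * bd_coef k σ (enum_val p))) /=.
rewrite sum_in_all; last first.
  move=> s ns; case: (eqVneq (g s) 0) => [->|nz]; first by rewrite mul0r.
  by rewrite (sg' _ nz) in ns.
by rewrite -fv -bg.
Qed.

Lemma telescope (a : nat -> int) m :
  \sum_(j < m) (-1) ^+ j * (a j + a j.+1) = a 0%N - (-1) ^+ m * a m.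
Proof.
elim: m => [|m IH]; first by rewrite big_ord0 expr0 mul1r subrr.
by rewrite big_ord_recr /= IH exprS; ring.
Qed.

Lemma euler_faces {S : finType} (D : {set {set S}}) :
  \sum_(j < #|S|.+2) (-1) ^+ j * (#|faces D (j%:Z - 1)|)%:Z =
  \sum_(J in D) (-1) ^+ #|J| :> int.
Proof.
have -> : \sum_(j < #|S|.+2) (-1) ^+ j * (#|faces D (j%:Z - 1)|)%:Z =
  \sum_(j < #|S|.+2) \sum_(J in D) (if #|J| == j then (-1) ^+ j else 0 : int).
  apply: eq_bigr => j _.
  rewrite -natz mulr_natr -sumr_const big_mkcond [RHS]big_mkcond.
  apply: eq_bigr => J _; rewrite in_faces.
  case: (J \in D) => //=.
  have -> : (#|J|%:Z == j%:Z - 1 + 1) = (#|J| == j) by apply/eqP/eqP; lia.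
  by [].
rewrite exchange_big /=; apply: eq_bigr => J _.
have lt : (#|J| < #|S|.+2)%N by have := max_card J; lia.
rewrite (bigD1 (Ordinal lt)) //= eqxx big1 ?addr0 // => j nj.
case: eqP => // e; case/eqP: nj; apply: val_inj => /=; by rewrite e.
Qed.

Lemma pairing {S : finType} (M : matroid S) b :
  \sum_(J : {set S}) (-1) ^+ #|J| * (mrank M J)%:Z =
  - \sum_(J in Dlt M setT b) (-1) ^+ #|J| :> int.
Proof.
pose tog := fun σ : {set S} => if b \in σ then σ :\ b else b |: σ.
have togK : involutive tog.
  move=> σ; rewrite /tog; case h: (b \in σ).
    by rewrite !inE eqxx /= setD1K.
  by rewrite setU11 setU1K ?h.
have R : \sum_(J in Dlt M setT b) (-1) ^+ #|J| =
   \sum_(J : {set S} | b \notin J) (if J \in Dlt M setT b then (-1) ^+ #|J| else 0 : int).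
  rewrite big_mkcond (bigID (fun J : {set S} => b \in J)) /= big1 ?add0r // => J bJ.
  rewrite inE (setUidPr (_ : [set b] \subset J)) ?sub1set //.
  by rewrite eqxx andbF.
rewrite R -sumrN (bigID (fun J : {set S} => b \in J)) /= addrC.
rewrite [X in _ + X = _](reindex_inj (inv_inj togK)) /=.
have -> : \sum_(i | b \in tog i) (-1) ^+ #|tog i| * (mrank M (tog i))%:Z =
  \sum_(i : {set S} | b \notin i) (-1) ^+ #|b |: i| * (mrank M (b |: i))%:Z.
  apply: eq_big => J; rewrite /tog; case h: (b \in J) => //=;
    by rewrite ?setU11 ?inE ?eqxx.
rewrite -big_split /=; apply: eq_bigr => J bJ.
rewrite cardsU1 bJ add1n exprS inE subsetT /=.
have h1 := r_U1 M b J; have h2 := r_1 M b; have h3 := r_le_U1 M b J.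
case: eqP => h.
  by rewrite /= h; ring.
have -> : mrank M (b |: J) = (mrank M J).+1 by lia.
by rewrite /= -addn1 PoszD; ring.
Qed.

Lemma Dlt_affine {S : finType} (M : matroid S) b : affine_complex M b = Dlt M setT b.
Proof. by apply/setP => J; rewrite !inE subsetT. Qed.

Lemma faces_none {S : finType} (D : {set {set S}}) i :
  (forall s, s \in D -> ~~ (#|s|%:Z == i + 1)) -> #|faces D i| = 0%N.
Proof.
move=> H; apply/eqP; rewrite cards_eq0; apply/eqP/setP => s.
rewrite in_faces inE; case: (boolP (s \in D)) => //= /H /negbTE ->.
by [].
Qed.

Lemma main_all (k : fieldType) {S : finType} (M : matroid S) (b : S) (i : int) :
  (red_homology_dim k (affine_complex M b) i)%:Z =
  (if i == (mrankM M)%:Z - 2 then beta_inv M else 0).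
Proof.
rewrite Dlt_affine /beta_inv /mrankM (pairing M b).
set D := Dlt M setT b; set r := mrank M setT.
have dc : dclosed D by move=> J K; apply: Dlt_dc.
have van : forall j, j != r%:Z - 2 -> red_homology_dim k D j = 0%N.
  move=> j hj; apply: acyc_zero dc _.
  by apply: (@vanish k S #|S| M setT b) => //; rewrite cardsT.
case: eqP => [ei|/eqP ne]; last by rewrite van.
have rS : (r <= #|S|)%N by have := mrank_le_card M setT; rewrite cardsT.
case: (posnP r) => [r0|rpos].
  have D0 : D = set0.
    apply/setP=> J; rewrite !inE subsetT /=.
    have := mrank_mono M (subsetT (b |: J)); have := mrank_mono M (subsetT J).
    rewrite -/r r0 => h1 h2; apply/negbTE; rewrite negbK; apply/eqP; lia.
  have h0 : red_homology_dim k D i = 0%N.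
    apply: acyc_zero dc _; apply: acyc_nofaces => s.
    by rewrite in_faces D0 inE.
  by rewrite h0 D0 big_set0 oppr0 mulr0.
have eul : \sum_(j < #|S|.+2) (-1) ^+ j * (red_homology_dim k D (j%:Z - 1))%:Z =
           \sum_(J in D) (-1) ^+ #|J|.
  rewrite -euler_faces.
  under eq_bigr do rewrite h_formula //.
  pose a := fun j : nat => (\rank (bdmx k D (j%:Z - 1)))%:Z.
  have -> : \sum_(j < #|S|.+2) (-1) ^+ j * (#|faces D (j%:Z - 1)|%:Z -
        (\rank (bdmx k D (j%:Z - 1)))%:Z - (\rank (bdmx k D (j%:Z - 1 + 1)))%:Z) =
      \sum_(j < #|S|.+2) (-1) ^+ j * #|faces D (j%:Z - 1)|%:Z -
      \sum_(j < #|S|.+2) (-1) ^+ j * (a j + a j.+1).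
    rewrite -sumrB; apply: eq_bigr => j _; rewrite /a.
    have -> : (j%:Z - 1 + 1) = (j.+1)%:Z - 1 by lia.
    ring.
  rewrite telescope.
  have a0 : a 0%N = 0.
    rewrite /a; apply/eqP; rewrite eqz_nat -leqn0.
    by apply: leq_trans (rank_leq_col _) _; rewrite faces_none.
  have an : a #|S|.+2 = 0.
    rewrite /a; apply/eqP; rewrite eqz_nat -leqn0.
    apply: leq_trans (rank_leq_row _) _; rewrite faces_none // => s _.
    have := max_card s => h; apply/eqP; lia.
  by rewrite a0 an mulr0 subrr subr0.
have lt : (r.-1 < #|S|.+2)%N by lia.
rewrite (bigD1 (Ordinal lt)) //= big1 ?addr0 in eul; last first.
  move=> j nj; rewrite van ?mulr0 //.
  apply: contra nj => /eqP h; apply/eqP; apply: val_inj => /=; lia.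
have ei' : (r.-1)%:Z - 1 = i by lia.
rewrite ei' in eul.
rewrite -eul -(prednK rpos) exprS.
have sq : (-1) ^+ r.-1 * (-1) ^+ r.-1 = 1 :> int by rewrite -expr2 sqrr_sign.
by rewrite mulN1r mulrN mulNr opprK mulrA sq mul1r.
Qed.

Unset Implicit Arguments.

Theorem theorem3p2 (k : fieldType) (S : finType) (M : matroid S)
  (Hrep : representable k M) (b : S) :
  (forall i : nat,
     (red_homology_dim k (affine_complex M b) i%:Z)%:Z =
       if i%:Z == (mrankM M)%:Z - 2 then beta_inv M else 0)
  /\
  (~~ is_loop M b ->
   forall i : int,
     (red_homology_dim k (affine_complex M b) i)%:Z =
       if i == (mrankM M)%:Z - 2 then beta_inv M else 0).
Proof.
split; first by move=> i; exact: main_all.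
by move=> _ i; exact: main_all.
Qed.
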